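(* Let $m,k$ be positive integers with $m\ge4$ and $m>k+2$. For $z\in\mathbb{F}_{2^k}$ define $f^{(z)}:\mathbb{F}_{2^m}\times\mathbb{F}_{2^m}\to\mathbb{F}_2$ by $f^{(z)}(x_1,x_2)={\rm Tr}_1^m(x_1x_2^{2^m-2})$ if ${\rm Tr}_1^k(z)=0$ and $f^{(z)}(x_1,x_2)={\rm Tr}_1^m(x_2x_1^{2^m-2})$ if ${\rm Tr}_1^k(z)=1$. Then $f:\mathbb{F}_{2^m}\times\mathbb{F}_{2^m}\times\mathbb{F}_{2^k}\times\mathbb{F}_{2^k}\to\mathbb{F}_2$, $f(x_1,x_2,y,z)=f^{(z)}(x_1,x_2)+{\rm Tr}_1^k(yz)$, is a GMM function which is not in the class $MM^{\#}$.
   Context: ${\rm Tr}_a^b$ denotes the trace from $\mathbb{F}_{2^b}$ to $\mathbb{F}_{2^a}$. A GMM (generalized Maiorana–McFarland) function is one of the form $f(x,y,z)=f^{(z)}(x)+{\rm Tr}_1^k(yz)$ on $W\times\mathbb{F}_{2^k}\times\mathbb{F}_{2^k}$ with every $f^{(z)}$ bent on $W$. Two Boolean functions $f,g$ on an $\mathbb{F}_2$-space $X$ are EA-equivalent if $g(x)=f(L(x)+a)+\langle c,x\rangle+b$ with $L$ a linear permutation of $X$, $a,c\in X$, $b\in\mathbb{F}_2$. The Maiorana–McFarland class on $\mathbb{F}_{2^N}\times\mathbb{F}_{2^N}$ consists of functions ${\rm Tr}_1^N(x\pi(y))+g(y)$ with $\pi$ a permutation of $\mathbb{F}_{2^N}$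 and $g$ arbitrary; $MM^{\#}$ is the set of Boolean functions on a $2N$-dimensional $\mathbb{F}_2$-space EA-equivalent (after a linear identification with $\mathbb{F}_{2^N}^2$) to such a function. *)

(* Defs.v *)
From HB Require Import structures.
From mathcomp Require Import all_boot all_order all_algebra all_fingroup all_field.
Set Implicit Arguments. Unset Strict Implicit. Unset Printing Implicit Defensive.
Import GRing.Theory.
Local Open Scope ring_scope.

Definition tr (F : finFieldType) (n : nat) (x : F) : F := \sum_(i < n) x ^+ (2 ^ i).

(* Tr_1^n as a Boolean (F_2-valued) function: true <-> Tr = 1 (Tr takes values in {0,1}). *)
Definition trb (F : finFieldType) (n : nat) (x : F) : bool := tr n x == 1.

Definition walsh (F : finFieldType) (m : nat) (h : F * F -> bool) (a : F * F) : int :=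
  \sum_(x : F * F) (-1) ^+ (h x (+) trb m (a.1 * x.1 + a.2 * x.2)).

Definition bent (F : finFieldType) (m : nat) (h : F * F -> bool) : Prop :=
  forall a : F * F, (walsh m h a) ^+ 2 = (#|F| ^ 2)%:Z.

Definition isGMM (F K : finFieldType) (m k : nat) (f : F * F * K * K -> bool) : Prop :=
  exists g : K -> (F * F -> bool),
    (forall z, bent m (g z)) /\
    (forall x y z, f (x, y, z) = g z x (+) trb k (y * z)).

(* F_2-linear maps between F_2-spaces (char 2 zmodTypes): additive maps. *)
Definition F2linear (U V : zmodType) (L : U -> V) : Prop :=
  forall u v, L (u + v) = L u + L v.

Definition F2functional (U : zmodType) (l : U -> bool) : Prop :=
  forall u v, l (u + v) = l u (+) l v.

Definition mmfun (L : finFieldType) (N : nat) (pi : {perm L}) (g : L -> bool)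
  (w : L * L) : bool := trb N (w.1 * pi w.2) (+) g w.2.

(* MM^#: f on the F_2-space V of dimension 2N is EA-equivalent, after a linear
   identification V ~ F_{2^N}^2, to a Maiorana-McFarland function. *)
Definition MMsharp (V : zmodType) (N : nat) (f : V -> bool) : Prop :=
  exists (L : finFieldType), #|L| = (2 ^ N)%N /\
  exists (Lam : V -> L * L) (a : V) (l : V -> bool) (b : bool)
         (pi : {perm L}) (g : L -> bool),
    F2linear Lam /\ bijective Lam /\ F2functional l /\
    forall v, f v = mmfun N pi g (Lam (v + a)) (+) l v (+) b.

Definition fz (F K : finFieldType) (m k : nat) (z : K) (x : F * F) : bool :=
  if trb k z then trb m (x.2 * x.1 ^+ (2 ^ m - 2))
  else trb m (x.1 * x.2 ^+ (2 ^ m - 2)).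

Definition fcor (F K : finFieldType) (m k : nat) (v : F * F * K * K) : bool :=
  let: (x, y, z) := v in fz (F := F) m k z x (+) trb k (y * z).

(* Main.v *)
Require Import Defs.
From HB Require Import structures.
From mathcomp Require Import all_boot all_order all_algebra all_fingroup all_field.
From mathcomp Require Import ring zify.
Set Implicit Arguments. Unset Strict Implicit. Unset Printing Implicit Defensive.
Import GRing.Theory Num.Theory.
Local Open Scope ring_scope.


Section Trace.
Variables (F : finFieldType) (n : nat).
Hypothesis HF : #|F| = (2 ^ n)%N.

Lemma char2F : (2 \in [pchar F])%N.
Proof. exact: (card_finPcharP HF). Qed.

Lemma add2F (x : F) : x + x = 0.
Proof. exact: (addrr_pchar2 char2F). Qed.

Lemma sqrDF (x y : F) : (x + y) ^+ 2 = x ^+ 2 + y ^+ 2.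
Proof. by rewrite sqrrD mulr2n add2F addr0. Qed.

Lemma powDF i (x y : F) : (x + y) ^+ (2 ^ i) = x ^+ (2 ^ i) + y ^+ (2 ^ i).
Proof.
elim: i x y => [|i IH] x y; first by rewrite !expr1.
by rewrite expnS !exprM sqrDF IH.
Qed.

Lemma trD (x y : F) : tr n (x + y) = tr n x + tr n y.
Proof. by rewrite /tr -big_split /=; apply: eq_bigr => i _; rewrite powDF. Qed.

Lemma tr_sq (x : F) : tr n x ^+ 2 = tr n x.
Proof.
have sqm : {morph (fun t : F => t ^+ 2) : a b / a + b >-> a + b} by move=> a b; rewrite sqrDF.
rewrite /tr (big_morph _ sqm (expr0n _ 2)).
under eq_bigr => i _ do rewrite -exprM -expnSr.
case: n HF => [|n'] HF'; first by rewrite !big_ord0.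
rewrite big_ord_recr big_ord_recl /= -HF' expf_card expn0 expr1 addrC.
by congr (_ + _); apply: eq_bigr => i _; rewrite expnS.
Qed.

Lemma tr01 (x : F) : tr n x = 0 \/ tr n x = 1.
Proof.
have : tr n x * (tr n x - 1) == 0 by rewrite mulrBr mulr1 -expr2 tr_sq subrr.
by rewrite mulf_eq0 => /orP[] /eqP H; [left | right; apply/eqP; rewrite -subr_eq0 H].
Qed.

Lemma trbD (x y : F) : trb n (x + y) = trb n x (+) trb n y.
Proof.
rewrite /trb trD; case: (tr01 x) => ->; case: (tr01 y) => ->;
rewrite ?addr0 ?add0r ?add2F ?eqxx //= ?(eq_sym 0) ?oner_eq0 //.
Qed.

Lemma trb0 : trb n (0 : F) = false.
Proof. by have := trbD 0 0; rewrite addr0 addbb. Qed.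

Lemma trb_ex : (0 < n)%N -> exists x : F, trb n x.
Proof.
move=> n0.
pose P : {poly F} := \sum_(i < n) 'X^(2 ^ i).
have PE x : P.[x] = tr n x by rewrite horner_sum; apply: eq_bigr => i _; rewrite hornerXn.
apply/existsP; apply: contraT; rewrite negb_exists => /forallP H.
have P0 : P != 0.
  apply/eqP => /(congr1 (fun p : {poly F} => p`_(2 ^ n.-1))).
  rewrite coef_sum coef0 (bigD1 (@Ordinal n n.-1 ltac:(by rewrite ltn_predL))) //= coefXn eqxx big1 ?addr0.
    by move/eqP; rewrite oner_eq0.
  move=> i /eqP Hi; rewrite coefXn eqn_exp2l //.
  by case: eqP => // E; exfalso; apply: Hi; apply: val_inj; rewrite /= E.
have := max_poly_roots P0 (rs := enum F).
rewrite enum_uniq -cardE HF.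
have -> : all (root P) (enum F).
  by apply/allP => x _; rewrite /root PE; case: (tr01 x) (H x) => E; rewrite /trb E ?eqxx.
move=> /(_ isT isT).
have : (size P <= (2 ^ n.-1).+1)%N.
  apply: leq_trans (size_sum _ _ _) _.
  apply/bigmax_leqP => i _; rewrite size_polyXn ltnS leq_exp2l //.
  by rewrite -ltnS prednK.
move=> A B; have := leq_trans B A.
by rewrite ltnS -{1}(prednK n0) expnS leqNgt ltn_Pmull // expn_gt0.
Qed.

End Trace.


Section Inv.
Variables (F : finFieldType) (n : nat).
Hypothesis HF : #|F| = (2 ^ n)%N.
Hypothesis n1 : (1 < n)%N.

Lemma invE (x : F) : x ^+ (2 ^ n - 2) = x^-1.
Proof.
have h2 : (2 < 2 ^ n)%N.
  by rewrite -{1}(expn1 2) ltn_exp2l.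
have [->|x0] := eqVneq x 0; first by rewrite invr0 expr0n; case: (2 ^ n - 2)%N (ltn_sub2r h2 h2) => //; rewrite subnn.
have e : x ^+ (2 ^ n - 2) * x * x = 1 * x.
  by rewrite -mulrA -expr2 -exprD subnK ?(ltnW h2) // -HF expf_card mul1r.
have e2 := mulIf x0 e.
by rewrite -[x^-1]mul1r -e2 mulfK.
Qed.
End Inv.

Section Walsh.
Variables (F : finFieldType) (n : nat).
Hypothesis HF : #|F| = (2 ^ n)%N.
Hypothesis n0 : (0 < n)%N.

Lemma charsum (c : F) :
  \sum_(x : F) (-1) ^+ (trb n (x * c)) = (if c == 0%R then #|F|%:Z else 0) :> int.
Proof.
case: eqP => [->|/eqP c0].
  under eq_bigr => x _ do rewrite mulr0 (trb0 HF) expr0.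
  by rewrite sumr_const natz.
have [x0 tx0] := trb_ex HF n0.
set S := (X in X = _).
have : S = - S.
  rewrite {1}/S (reindex_inj (addIr (x0 / c))) /= -sumrN.
  apply: eq_bigr => x _.
  by rewrite mulrDl divfK // (trbD HF) tx0 signr_addb expr1 mulrN1.
move/eqP; rewrite -addr_eq0 -mulr2n mulrn_eq0 /=.
by move/eqP.
Qed.

Lemma dsum (a b : F) :
  \sum_(x1 : F) \sum_(x2 : F) (-1) ^+ (trb n (x1 * x2^-1) (+) trb n (a * x1 + b * x2))
  = (-1) ^+ (trb n (b * a^-1)) * #|F|%:Z :> int.
Proof.
rewrite exchange_big /=.
have E x1 x2 : trb n (x1 * x2^-1) (+) trb n (a * x1 + b * x2)
   = trb n (x1 * (x2^-1 + a)) (+) trb n (b * x2).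
  by rewrite (trbD HF) addbA -(trbD HF) [a * x1]mulrC -mulrDr.
under eq_bigr => x2 _ do under eq_bigr => x1 _ do rewrite E signr_addb.
under eq_bigr => x2 _ do rewrite -big_distrl /= charsum.
rewrite (bigD1 a^-1) //= invrK (add2F HF) eqxx big1 ?addr0; first by rewrite mulrC.
move=> x2 hx; rewrite addr_eq0 (oppr_pchar2 (char2F HF)); case: eqP => [e|]; last by rewrite mul0r.
by move: hx; rewrite -e invrK eqxx.
Qed.

Lemma dsum_sq (a b : F) :
  (\sum_(x1 : F) \sum_(x2 : F) (-1) ^+ (trb n (x1 * x2^-1) (+) trb n (a * x1 + b * x2))) ^+ 2
  = (#|F| ^ 2)%:Z :> int.
Proof. by rewrite dsum exprMn sqrr_sign mul1r expr2 -PoszM mulnn. Qed.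

End Walsh.

Section Deriv.
Variables (F : finFieldType) (n : nat).
Hypothesis HF : #|F| = (2 ^ n)%N.
Hypothesis n0 : (0 < n)%N.

Lemma gmmB (I : F -> F) a1 a2 b1 b2 :
  (forall s t, trb n ((s + a1 + b1) * I (t + a2 + b2)) (+) trb n ((s + a1) * I (t + a2))
     (+) trb n ((s + b1) * I (t + b2)) (+) trb n (s * I t) = false) ->
  forall t, I (t + a2 + b2) + I (t + a2) + I (t + b2) + I t = 0.
Proof.
move=> H t; apply/eqP; apply: contraT => S0.
have [x0 tx0] := trb_ex HF n0.
have H1 := H (x0 / (I (t + a2 + b2) + I (t + a2) + I (t + b2) + I t)) t.
have H2 := H 0 t.
move: S0 H1 H2.
set I1 := I (t + a2 + b2); set I2 := I (t + a2); set I3 := I (t + b2); set I4 := I t.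
set s := x0 / _ => S0.
rewrite -!addrA !mulrDl !(trbD HF) !mul0r !(trb0 HF).
have : trb n (s * (I1 + (I2 + (I3 + I4)))) = true by rewrite !addrA divfK.
rewrite !mulrDr !(trbD HF).
move: (trb n (s * I1)) (trb n (s * I2)) (trb n (s * I3)) (trb n (s * I4)) (trb n (a1 * I1)) (trb n (b1 * I1)) (trb n (a1 * I2)) (trb n (b1 * I3)).
by do 8! case.
Qed.

Lemma gmmC (c d : F) : (4 < #|F|)%N -> c != 0 -> d != 0 -> c != d ->
  exists t : F, (t + c + d)^-1 + (t + c)^-1 + (t + d)^-1 + t^-1 != 0.
Proof.
move=> F4 c0 d0 cd.
pose sq : seq F := [:: 0; c; d; c + d].
have [t ht] : exists t : F, t \notin sq.
  apply/existsP; apply: contraT; rewrite negb_exists => /forallP H.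
  have : (#|F| <= #|sq|)%N.
    by apply: subset_leq_card; apply/subsetP => x _; have := H x; rewrite negbK.
  by move=> /leq_trans /(_ (card_size _)) /=; rewrite leqNgt F4.
exists t.
have ch := char2F HF.
have sub (x y : F) : (x + y == 0) = (x == y) by rewrite addr_eq0 (oppr_pchar2 ch).
move: ht; rewrite !inE !negb_or => /and4P [t0 tc td tcd].
have tc' : t + c != 0 by rewrite sub.
have td' : t + d != 0 by rewrite sub.
have tcd' : t + c + d != 0 by rewrite -addrA sub.
have cd' : c + d != 0 by rewrite sub.
have E : (t + c + d)^-1 - (t + c)^-1 - (t + d)^-1 + t^-1
     = c * d * (t + t + c + d) / (t * (t + c) * (t + d) * (t + c + d)).
  by field; rewrite tcd' td' tc' t0.
rewrite !(oppr_pchar2 ch) (add2F HF) add0r in E.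
by rewrite E mulf_neq0 ?invr_eq0 ?mulf_neq0.
Qed.

Lemma gmmD (V : finType) (P : pred V) (pr : V -> F) :
  (4 < #|F|)%N -> (1 < n)%N ->
  (forall a b, P a -> P b -> forall t,
     (t + pr a + pr b) ^+ (2 ^ n - 2) + (t + pr a) ^+ (2 ^ n - 2)
     + (t + pr b) ^+ (2 ^ n - 2) + t ^+ (2 ^ n - 2) = 0) ->
  exists c, forall a, P a -> pr a = 0 \/ pr a = c.
Proof.
move=> F4 n1 H.
case: (pickP [pred a | P a && (pr a != 0)]) => [a /andP [Pa a0] | H0]; last first.
  exists 0 => a Pa; left; have := H0 a; rewrite /= Pa /=.
  by move/negbFE/eqP.
exists (pr a) => b Pb.
have [->|b0] := eqVneq (pr b) 0; first by left.
have [->|ab] := eqVneq (pr b) (pr a); first by right.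
exfalso.
have [t Ht] := gmmC F4 a0 b0 (negbT (introF eqP (fun e => (elimN eqP ab) (esym e)))).
by move: Ht; rewrite -!(invE HF n1) H ?eqxx.
Qed.

End Deriv.


Lemma bent_fz (m k : nat) (F K : finFieldType) (z : K) :
  (1 < m)%N -> #|F| = (2 ^ m)%N -> bent m (fz (F := F) m k z).
Proof.
move=> m1 HF a; rewrite /walsh /fz.
have m0 : (0 < m)%N by apply: ltnW.
case: (trb k z).
  have -> : \sum_(x : F * F) (-1) ^+ (trb m (x.2 * x.1 ^+ (2 ^ m - 2)) (+) trb m (a.1 * x.1 + a.2 * x.2))
    = \sum_(x2 : F) \sum_(x1 : F) (-1) ^+ (trb m (x2 * x1^-1) (+) trb m (a.2 * x2 + a.1 * x1)) :> int.
    by rewrite exchange_big pair_bigA; apply: eq_bigr => [[x1 x2]] _ /=; rewrite (invE HF) // addrC.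
  exact: dsum_sq.
have -> : \sum_(x : F * F) (-1) ^+ (trb m (x.1 * x.2 ^+ (2 ^ m - 2)) (+) trb m (a.1 * x.1 + a.2 * x.2))
  = \sum_(x1 : F) \sum_(x2 : F) (-1) ^+ (trb m (x1 * x2^-1) (+) trb m (a.1 * x1 + a.2 * x2)) :> int.
  by rewrite pair_bigA; apply: eq_bigr => [[x1 x2]] _ /=; rewrite (invE HF).
exact: dsum_sq.
Qed.

Lemma pick01 (F : finFieldType) (x y c : F) :
  (x = 0 \/ x = c) -> (y = 0 \/ y = c) -> (x == 0) = (y == 0) -> x = y.
Proof.
by move=> [->|->] [->|->] //; rewrite eqxx; [move=> /esym/eqP | move=> /eqP].
Qed.

Lemma ext4 (F K : finFieldType) (u v : F * F * K * K) :
  u.1.1.1 = v.1.1.1 -> u.1.1.2 = v.1.1.2 -> u.1.2 = v.1.2 -> u.2 = v.2 -> u = v.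
Proof. by case: u => [[[? ?] ?] ?]; case: v => [[[? ?] ?] ?] /= -> -> -> ->. Qed.

Lemma natcontra (m k : nat) : (k + 2 < m)%N -> ~ (2 ^ (m + k) <= 2 ^ k * 2 ^ k * 2 * 2)%N.
Proof.
move=> mk; rewrite -expnD -expnSr -expnSr leq_exp2l //.
by apply/negP; rewrite -ltnNge; lia.
Qed.

Lemma not_mm (m k : nat) (F K : finFieldType) :
  (0 < k)%N -> (4 <= m)%N -> (k + 2 < m)%N ->
  #|F| = (2 ^ m)%N -> #|K| = (2 ^ k)%N ->
  ~ MMsharp (m + k) (@fcor F K m k).
Proof.
move=> k0 m4 mk HF HK [L [HL [Lam [a0 [l [b [pi [g [Hlin [Hbij [Hl Hf]]]]]]]]]]].
have m1 : (1 < m)%N by apply: leq_trans m4.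
have m0 : (0 < m)%N by apply: ltnW.
have F4 : (4 < #|F|)%N.
  have h : (2 ^ 3 <= 2 ^ m)%N by rewrite leq_exp2l // ltnW.
  by rewrite HF; apply: leq_trans h.
pose V := (F * F * K * K)%type.
have DD (v a c : V) : (Lam a).2 = 0 -> (Lam c).2 = 0 ->
   fcor m k (v + a + c) (+) fcor m k (v + a) (+) fcor m k (v + c) (+) fcor m k v = false.
  move=> ha hc; rewrite !Hf.
  have E1 : Lam (v + a + c + a0) = Lam (v + a0) + Lam a + Lam c.
    by rewrite -!Hlin addrAC [v + a + a0]addrAC.
  have E2 : Lam (v + a + a0) = Lam (v + a0) + Lam a by rewrite -Hlin addrAC.
  have E3 : Lam (v + c + a0) = Lam (v + a0) + Lam c by rewrite -Hlin addrAC.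
  rewrite E1 E2 E3 !Hl.
  move: (Lam (v + a0)) (Lam a) (Lam c) ha hc => [w1 w2] [al z1] [ga z2] /= -> ->.
  rewrite /mmfun /= !addr0 !mulrDl !(trbD HL).
  case: b Hf => Hf;
  by case: (l v); case: (l a); case: (l c); case: (g w2); case: (trb _ (w1 * _));
     case: (trb _ (al * _)); case: (trb _ (ga * _)).
pose P : pred V := fun w => ((Lam w).2 == 0) && (w.2 == 0).
have key (a c : V) : P a -> P c -> forall (x : F * F) (z : K),
  fz m k z (x + a.1.1 + c.1.1) (+) fz m k z (x + a.1.1) (+) fz m k z (x + c.1.1) (+) fz m k z x = false.
  case: a => [[[a1 a2] ya] za]; case: c => [[[c1 c2] yc] zc].
  rewrite /P /= => /andP [/eqP ha /eqP hza] /andP [/eqP hc /eqP hzc] x z.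
  have := DD ((x, 0), z) _ _ ha hc.
  rewrite hza hzc /fcor /=.
  rewrite !addr0 !add0r !mulrDl !(trbD HK) !mul0r (trb0 HK).
  move: (fz m k z (x + (a1, a2) + (c1, c2))) (fz m k z (x + (a1, a2))).
  move: (fz m k z (x + (c1, c2))) (fz m k z x) (trb k (ya * z)) (trb k (yc * z)).
  by do 6! case.
have [z1 tz1] := trb_ex HK k0.
have h1 (a c : V) : P a -> P c -> forall t,
  (t + a.1.1.2 + c.1.1.2) ^+ (2 ^ m - 2) + (t + a.1.1.2) ^+ (2 ^ m - 2)
  + (t + c.1.1.2) ^+ (2 ^ m - 2) + t ^+ (2 ^ m - 2) = 0.
  move=> Pa Pc; refine (@gmmB F m HF m0 (fun y : F => y ^+ (2 ^ m - 2)) a.1.1.1 a.1.1.2 c.1.1.1 c.1.1.2 _) => s t.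
  have := key a c Pa Pc (s, t) 0.
  by rewrite /fz (trb0 HK) /=.
have h2 (a c : V) : P a -> P c -> forall t,
  (t + a.1.1.1 + c.1.1.1) ^+ (2 ^ m - 2) + (t + a.1.1.1) ^+ (2 ^ m - 2)
  + (t + c.1.1.1) ^+ (2 ^ m - 2) + t ^+ (2 ^ m - 2) = 0.
  move=> Pa Pc; apply: (@gmmB F m HF m0 (fun y : F => y ^+ (2 ^ m - 2)) a.1.1.2 a.1.1.1 c.1.1.2 c.1.1.1) => s t.
  have := key a c Pa Pc (t, s) z1.
  by rewrite /fz tz1 /=.
have [c2 Hc2] := @gmmD F m HF _ P (fun w : V => w.1.1.2) F4 m1 h1.
have [c1 Hc1] := @gmmD F m HF _ P (fun w : V => w.1.1.1) F4 m1 h2.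
case: Hbij => Li LiK KLi.
pose r (z0 : K) : V := odflt 0 [pick w : V | ((Lam w).2 == 0) && (w.2 == z0)].
pose wf (al : L) : V := Li (al, 0).
have Lw al : Lam (wf al) = (al, 0) by exact: KLi.
have rP al : (Lam (r (wf al).2)).2 = 0 /\ (r (wf al).2).2 = (wf al).2.
  rewrite /r; case: pickP => [w /andP [/eqP e1 /eqP e2] | H] //=.
  by have := H (wf al); rewrite Lw eqxx eqxx.
pose d al := wf al + r (wf al).2.
have dP al : P (d al).
  case: (rP al) => e1 e2.
  by rewrite /P /d Hlin /= e1 Lw /= addr0 e2 (add2F HK) !eqxx.
pose phi (al : L) : K * K * bool * bool :=
  ((wf al).2, (d al).1.2, (d al).1.1.1 == 0, (d al).1.1.2 == 0).
have phi_inj : injective phi.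
  move=> al be [e1 e2 e3 e4].
  have rr : r (wf al).2 = r (wf be).2 by rewrite e1.
  have dd : d al = d be.
    apply: ext4.
    - exact: (pick01 (Hc1 _ (dP al)) (Hc1 _ (dP be)) e3).
    - exact: (pick01 (Hc2 _ (dP al)) (Hc2 _ (dP be)) e4).
    - exact: e2.
    - by have := dP al; have := dP be; rewrite /P => /andP [_ /eqP ->] /andP [_ /eqP ->].
  have ww : wf al = wf be by move: dd; rewrite /d rr => /addIr.
  by have := congr1 (fun w => (Lam w).1) ww; rewrite /= !Lw.
have := @leq_card _ _ phi phi_inj.
rewrite !card_prod card_bool HL HK.
exact: natcontra.
Qed.

Theorem corollary3p10 (m k : nat) (F K : finFieldType) :
  (0 < k)%N -> (4 <= m)%N -> (k + 2 < m)%N ->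
  #|F| = (2 ^ m)%N -> #|K| = (2 ^ k)%N ->
  isGMM m k (@fcor F K m k) /\ ~ MMsharp (m + k) (@fcor F K m k).
Proof.
move=> k0 m4 mk HF HK; split; last exact: not_mm.
have m1 : (1 < m)%N by apply: leq_trans m4.
exists (fun z => fz m k z); split; last by [].
by move=> z; apply: bent_fz.
Qed.
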